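(* Let $n=n_1\cdots n_\ell>2$ with integers $n_i\ge2$ and $U=F_{(n_1,\dots,n_\ell)}$ (modes labelled as in the context). Let $\lambda\in[0,1]$ and $\Lambda=1-(1-\lambda)^{\log_2 n}$. In the lossy distillation protocol with input $\rho^{(n)}(\epsilon)$, the heralding rate satisfies $$h_n(\epsilon;\lambda)\ge(1-\Lambda)^{n-1}h_n(\epsilon)=(1-\lambda)^{(n-1)\log_2 n}\,h_n(\epsilon),$$ and for $\epsilon=0$ equality holds: $h_n(0;\lambda)=(1-\Lambda)^{n-1}h_n(0)=(1-\lambda)^{(n-1)\log_2n}h_n(0)$.
   Context: $F_m=\frac1{\sqrt m}(e^{2\pi ijk/m})_{j,k}$, $F_{(n_1,\dots,n_\ell)}=F_{n_1}\otimes\cdots\otimes F_{n_\ell}$, with $|m_1\rangle\otimes\cdots\otimes|m_\ell\rangle$ labelled as mode $m_1+n_1m_2+\cdots+(n_1\cdots n_{\ell-1})m_\ell$ (includes $F_n$ and $H_{2^r}=F_{(2,\dots,2)}$). Photons have external modes $0,\dots,n-1$ and internal states in a space with orthonormal basis $\{\xi_0,\xi_1,\dots\}$; $\hat U$ acts as $a_j^\dagger[\xi]\mapsto\sum_iU_{ij}a_i^\dagger[\xi]$. Ideal patterns: $(s_0,\dots,s_{n-1})$ with $\sum s_i=n$, $s_0=1$, $\langle s_0,\dots,s_{n-1}|\hat U|1,\dots,1\rangle\ne0$. Input $\rho^{(n)}(\epsilon)$: one photon per mode, the photon in mode $i$ independently having internal state $\xi_0$ with probability $1-\epsilon$, otherwise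 $\xi_j$ with probability $\epsilon/R$ for each $1\le j\le R$ (URS model, fixed $R\ge1$), or $\xi_{i+1}$ with probability $\epsilon$ (OBB limit). Lossless protocol: apply $\hat U$, count photons in modes $1,\dots,n-1$ as $(s_1,\dots,s_{n-1})$, set $s_0=n-\sum_{j\ge1}s_j$, herald iff $(s_0,\dots,s_{n-1})$ is ideal; $h_n(\epsilon)$ is the heralding probability. Lossy protocol: after $\hat U$, each photon is independently lost with probability $\Lambda$ (a loss channel on each mode); then photons in modes $1,\dots,n-1$ are counted as $(s_1,\dots,s_{n-1})$, and success is heralded iff $(1,s_1,\dots,s_{n-1})$ is an ideal pattern; $h_n(\epsilon;\lambda)$ is this heralding probability. *)

(* Defs.v *)
From HB Require Import structures.
From mathcomp Require Import all_boot all_order all_algebra all_fingroup.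
From mathcomp Require Import all_classical all_reals all_analysis.
From mathcomp Require Import complex.
Set Implicit Arguments. Unset Strict Implicit. Unset Printing Implicit Defensive.
Import Order.TTheory GRing.Theory Num.Theory.
Local Open Scope ring_scope.

Section Defs.
Variable R : realType.
Local Notation C := (complex R).

Definition sqmod (z : C) : R := complex.Re z ^+ 2 + complex.Im z ^+ 2.

Definition fourier (m j k : nat) : C :=
  let th := 2 * pi * (j * k)%:R / m%:R in
  Complex (cos th / Num.sqrt m%:R) (sin th / Num.sqrt m%:R).

(* r-th mixed-radix digit of the mode label j:
   j = m_1 + n_1 m_2 + ... + (n_1...n_{l-1}) m_l, digit r = m_{r+1} *)
Definition digit (ns : seq nat) (r j : nat) : nat :=
  (j %/ \prod_(x <- take r ns) x) %% nth 1%N ns r.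

(* entries of F_{(n_1,...,n_l)} = F_{n_1} (x) ... (x) F_{n_l} *)
Definition fourier_tensor (ns : seq nat) (j k : nat) : C :=
  \prod_(r < size ns) fourier (nth 1%N ns r) (digit ns r j) (digit ns r k).

Definition mode_seq (n : nat) (s : nat -> nat) : seq nat :=
  flatten [seq nseq (s i) i | i <- iota 0 n].

(* <s_0,...,s_{n-1}| U^ |1,...,1> = perm(U[d_s, :]) / sqrt(prod_i s_i!) *)
Definition fock_amp (U : nat -> nat -> C) (n : nat) (s : nat -> nat) : C :=
  (\sum_(sig : 'S_n) \prod_(k < n) U (nth 0%N (mode_seq n s) k) (sig k))
  / (real_complex R (Num.sqrt (\prod_(i < n) (s i)`!)%:R)).

Definition ideal (U : nat -> nat -> C) (n : nat) (s : nat -> nat) : Prop :=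
  (\sum_(i < n) s i)%N = n /\ s 0%N = 1%N /\ fock_amp U n s <> 0.

Inductive noise_model := URS of nat | OBB.

Definition nlabels (M : noise_model) (n : nat) : nat :=
  match M with URS r => r.+1 | OBB => n.+1 end.

(* probability that the photon in mode i has internal state xi_l *)
Definition label_prob (M : noise_model) (eps : R) (i l : nat) : R :=
  match M with
  | URS r => if l == 0%N then 1 - eps else if (l <= r)%N then eps / r%:R else 0
  | OBB => if l == 0%N then 1 - eps else if l == i.+1 then eps else 0
  end.

Definition config_prob (M : noise_model) (n : nat) (eps : R)
    (c : {ffun 'I_n -> 'I_(nlabels M n)}) : R :=
  \prod_(i < n) label_prob M eps i (c i).

(* First-quantized output amplitude after U^, for input internal labels c:
   psi(o,t) = (1/sqrt n!) sum_pi prod_k U_{o_k, pi k} <xi_{t_k} | xi_{c_{pi k}}>,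
   o_k = external mode, t_k = internal label of the k-th particle slot. *)
Definition out_amp (U : nat -> nat -> C) (K n : nat) (c : {ffun 'I_n -> 'I_K})
    (o : {ffun 'I_n -> 'I_n}) (t : {ffun 'I_n -> 'I_K}) : C :=
  (\sum_(p : 'S_n) \prod_(k < n)
      (U (o k) (p k) * (if t k == c (p k) then 1 else 0)))
  / (real_complex R (Num.sqrt (n`!)%:R)).

Definition count (n : nat) (o : {ffun 'I_n -> 'I_n}) (j : nat) : nat :=
  #|[set k : 'I_n | nat_of_ord (o k) == j]|.

(* photons detected in mode j that were not lost (b k = lost) *)
Definition count_lossy (n : nat) (o : {ffun 'I_n -> 'I_n}) (b : {ffun 'I_n -> bool})
    (j : nat) : nat :=
  #|[set k : 'I_n | (nat_of_ord (o k) == j) && ~~ b k]|.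

Definition lossless_pattern (n : nat) (o : {ffun 'I_n -> 'I_n}) (j : nat) : nat :=
  if j == 0%N then (n - \sum_(1 <= j' < n) count o j')%N else count o j.

Definition lossy_pattern (n : nat) (o : {ffun 'I_n -> 'I_n}) (b : {ffun 'I_n -> bool})
    (j : nat) : nat :=
  if j == 0%N then 1%N else count_lossy o b j.

Definition indicator (P : Prop) : R := if `[< P >] then 1 else 0.

Definition herald_lossless (M : noise_model) (U : nat -> nat -> C) (n : nat)
    (eps : R) : R :=
  \sum_(c : {ffun 'I_n -> 'I_(nlabels M n)}) @config_prob M n eps c *
   \sum_(o : {ffun 'I_n -> 'I_n}) \sum_(t : {ffun 'I_n -> 'I_(nlabels M n)})
     sqmod (out_amp U c o t) * indicator (ideal U n (lossless_pattern o)).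

Definition herald_lossy (M : noise_model) (U : nat -> nat -> C) (n : nat)
    (eps Lam : R) : R :=
  \sum_(c : {ffun 'I_n -> 'I_(nlabels M n)}) @config_prob M n eps c *
   \sum_(o : {ffun 'I_n -> 'I_n}) \sum_(t : {ffun 'I_n -> 'I_(nlabels M n)})
     sqmod (out_amp U c o t) *
     \sum_(b : {ffun 'I_n -> bool})
        (\prod_(k < n) (if b k then Lam else 1 - Lam)) *
        indicator (ideal U n (lossy_pattern o b)).

Definition log2 (x : R) : R := ln x / ln 2.

End Defs.

(* Main.v *)
Require Import Defs.
From HB Require Import structures.
From mathcomp Require Import all_boot all_order all_algebra all_fingroup.
From mathcomp Require Import all_classical all_reals all_analysis.
From mathcomp Require Import complex.
From mathcomp Require Import ring lra zify.
Set Implicit Arguments. Unset Strict Implicit. Unset Printing Implicit Defensive.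
Import Order.TTheory GRing.Theory Num.Theory.
Local Open Scope ring_scope.

Section Trig.
Variable R : realType.
Local Notation C := (complex R).
Definition expi (x : R) : C := Complex (cos x) (sin x).

Lemma mulcE (a b c d : R) : (Complex a b) * (Complex c d) = Complex (a*c - b*d) (a*d + b*c).
Proof. by []. Qed.

Lemma expiD x y : expi (x + y) = expi x * expi y.
Proof. by rewrite /expi mulcE cosD sinD; congr Complex; ring. Qed.

Lemma expi0 : expi 0 = 1.
Proof. by rewrite /expi cos0 sin0. Qed.

Lemma expi_sum n (F : 'I_n -> R) : \prod_(k < n) expi (F k) = expi (\sum_(k < n) F k).
Proof.
elim/big_rec2: _ => [|i x y _ ->]; first by rewrite expi0.
by rewrite expiD.
Qed.

Lemma expi_2pin x (k : nat) : expi (x + pi *+ 2 *+ k) = expi x.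
Proof. by rewrite /expi (periodicn (@cosD2pi R)) (periodicn (@sinD2pi R)). Qed.

Lemma cos_eq1 (x : R) : 0 <= x < pi *+ 2 -> cos x = 1 -> x = 0.
Proof.
move=> /andP[x0 x2] c1.
have hx : x = (x / 2) *+ 2 by rewrite -mulr_natr mulfVK // pnatr_eq0.
have : sin (x/2) ^+ 2 = 0.
  move: c1; rewrite {1}hx cos_mulr2n => h.
  rewrite sin2cos2; move: h; rewrite mulr2n; lra.
move/eqP; rewrite expf_eq0 /= => /eqP s0.
case: (ltrgt0P x) x0 => // xp _.
have : 0 < sin (x/2) by apply: sin_gt0_pi; apply/andP; split; [lra|]; move: x2; rewrite mulr2n; lra.
by rewrite s0 ltxx.
Qed.

Lemma expi_eq1 (N m : nat) : (0 < N)%N -> expi (pi *+ 2 * m%:R / N%:R) = 1 -> (N %| m)%N.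
Proof.
move=> N0 h.
have hm : m = (m %/ N * N + m %% N)%N := divn_eq m N.
have hN : (N%:R : R) != 0 by rewrite pnatr_eq0 -lt0n.
have e : (pi : R) *+ 2 * m%:R / N%:R = pi *+ 2 * (m %% N)%:R / N%:R + pi *+ 2 *+ (m %/ N).
  rewrite {1}hm. rewrite natrD natrM -mulr_natr; field; exact: hN.
move: h; rewrite e expi_2pin /expi => -[c1 _].
have pi0 := pi_gt0 R.
have r0 : (0:R) <= (m %% N)%:R / N%:R by rewrite divr_ge0.
have r1 : (m %% N)%:R / N%:R < (1:R).
  by rewrite ltr_pdivrMr ?ltr0n // mul1r ltr_nat ltn_mod.
have : (pi : R) *+ 2 * (m %% N)%:R / N%:R = 0.
  apply: cos_eq1 c1; apply/andP; split.
    by rewrite -mulrA mulr_ge0 // mulrn_wge0 // ltW.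
  rewrite -mulrA mulr2n mulrDl.
  have : (pi : R) * ((m %% N)%:R / N%:R) < pi * 1 by rewrite ltr_pM2l.
  lra.
have p2 : (pi : R) *+ 2 != 0 by rewrite mulrn_eq0 /= (gt_eqF pi0).
move/eqP; rewrite -mulrA mulf_eq0 (negbTE p2) /= mulf_eq0 invr_eq0 (negbTE hN) orbF pnatr_eq0.
by move=> H; rewrite /dvdn H.
Qed.

Lemma fourier_shift (N a b : nat) : (0 < N)%N ->
  fourier R N a ((b.+1) %% N) = fourier R N a b * expi (2 * pi * a%:R / N%:R).
Proof.
move=> N0.
have hN : (N%:R : R) != 0 by rewrite pnatr_eq0 -lt0n.
set q := (b.+1 %/ N)%N.
have hb : (a * (b.+1 %% N) + N * (a * q) = a * b + a)%N.
  rewrite mulnCA -mulnDr [(N * q)%N]mulnC addnC -divn_eq; lia.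
set th' := 2 * (pi : R) * (a * (b.+1 %% N))%:R / N%:R.
have E : 2 * (pi : R) * (a * b)%:R / N%:R + 2 * pi * a%:R / N%:R = th' + pi *+ 2 *+ (a * q).
  have : ((a * (b.+1 %% N))%:R + N%:R * (a * q)%:R : R) = (a * b)%:R + a%:R.
    by rewrite -natrM -!natrD hb.
  move=> h.
  have -> : (pi : R) *+ 2 *+ (a * q) = 2 * pi * (a * q)%:R.
    by rewrite -mulrnA -[LHS]mulr_natr natrM; ring.
  rewrite /th'.
  have -> : 2 * (pi : R) * (a * b)%:R / N%:R + 2 * pi * a%:R / N%:R
     = 2 * pi * ((a * b)%:R + a%:R) / N%:R by ring.
  rewrite -h; field; exact: hN.
rewrite /fourier /expi mulcE /= -/th'.
rewrite -[cos th'](periodicn (@cosD2pi R) (a * q)) -[sin th'](periodicn (@sinD2pi R) (a * q)) -E.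
rewrite cosD sinD; set s := Num.sqrt _; set u := cos _; set v := cos _; set w := sin _; set z := sin _.
congr Complex; ring.
Qed.
End Trig.

Lemma perm_shift (F : fieldType) n (A : 'I_n -> 'I_n -> F) (g : {perm 'I_n}) (w : 'I_n -> F) :
  (forall k j, A k (g j) = A k j * w k) ->
  \sum_(p : 'S_n) \prod_(k < n) A k (p k) != 0 -> \prod_(k < n) w k = 1.
Proof.
move=> hA hS.
have e : \sum_(p : 'S_n) \prod_(k < n) A k (p k) =
    (\sum_(p : 'S_n) \prod_(k < n) A k (p k)) * \prod_(k < n) w k.
  rewrite {1}(reindex_inj (@mulIg _ g)) /= mulr_suml; apply: eq_bigr => p _.
  rewrite -big_split /=; apply: eq_bigr => k _; by rewrite permM hA.
by apply: (mulfI hS); rewrite mulr1 -e.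
Qed.

Section Radix.
Variable ns : seq nat.
Hypothesis Hall : all (fun m => (2 <= m)%N) ns.
Definition PP r := (\prod_(x <- take r ns) x)%N.
Definition NN r := nth 1%N ns r.

Lemma prod_gt0 (s : seq nat) : all (fun m => (2 <= m)%N) s -> (0 < \prod_(x <- s) x)%N.
Proof. elim: s => [|x s IH] /=; first by rewrite big_nil. 
by move=> /andP[hx hs]; rewrite big_cons muln_gt0 IH // andbT; lia. Qed.

Lemma PP_gt0 r : (0 < PP r)%N.
Proof. apply: prod_gt0; move: Hall; rewrite -{1}(cat_take_drop r ns) all_cat => /andP[] //. Qed.

Lemma NN_ge2 r : (r < size ns)%N -> (2 <= NN r)%N.
Proof. by move=> hr; move/(all_nthP 1%N): Hall; apply. Qed.

Lemma PPS r : (r < size ns)%N -> PP r.+1 = (PP r * NN r)%N.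
Proof. by move=> hr; rewrite /PP (take_nth 1%N hr) -cats1 big_cat /= big_seq1. Qed.

Lemma PP_split r s : (r <= s)%N -> PP s = (PP r * \prod_(x <- take (s - r) (drop r ns)) x)%N.
Proof. by move=> hrs; rewrite /PP -{1}(subnKC hrs) takeD big_cat. Qed.

Lemma PP_size : PP (size ns) = (\prod_(m <- ns) m)%N.
Proof. by rewrite /PP take_size. Qed.

Lemma digitE r j : digit ns r j = (j %/ PP r %% NN r)%N.
Proof. by []. Qed.

Lemma divmod_small q a d : (a < d)%N -> ((q * d + a) %/ d = q /\ (q * d + a) %% d = a)%N.
Proof.
move=> ad; have d0 : (0 < d)%N by lia.
by rewrite divnMDl // divn_small // addn0 modnMDl modn_small.
Qed.

Lemma modS r y : (r < size ns)%N -> (y %% PP r.+1 = y %% PP r + PP r * digit ns r y)%N.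
Proof.
move=> hr; rewrite PPS // digitE.
have P0 := PP_gt0 r; have N0 : (0 < NN r)%N by have := NN_ge2 hr; lia.
rewrite {1}(divn_eq y (PP r)) {1}(divn_eq (y %/ PP r) (NN r)).
set q := (y %/ PP r %/ NN r)%N; set d := (y %/ PP r %% NN r)%N; set a := (y %% PP r)%N.
have ha : (a < PP r)%N by rewrite ltn_mod.
have hd : (d < NN r)%N by rewrite ltn_mod.
have -> : ((q * NN r + d) * PP r + a = q * (PP r * NN r) + (a + PP r * d))%N by ring.
have := divmod_small q (_ : a + PP r * d < PP r * NN r)%N; case=> [|_ ->]; last by [].
nia.
Qed.

Lemma digit_mod r y : (r < size ns)%N -> digit ns r y = digit ns r (y %% PP r.+1).
Proof.
move=> hr; rewrite !digitE.
have P0 := PP_gt0 r; have N0 : (0 < NN r)%N by have := NN_ge2 hr; lia.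
have e : y = (y %/ PP r.+1 * NN r * PP r + y %% PP r.+1)%N.
  by rewrite -mulnA [(NN r * _)%N]mulnC -PPS // -divn_eq.
set q := (y %/ PP r.+1)%N in e *; set a := (y %% PP r.+1)%N in e *.
by rewrite {1}e divnMDl // modnMDl.
Qed.


Lemma digit_div r s y : (r < s)%N ->
  digit ns s y = ((y %/ PP r.+1) %/ \prod_(x <- take (s - r.+1) (drop r.+1 ns)) x %% NN s)%N.
Proof. by move=> hrs; rewrite digitE (PP_split hrs) divnMA. Qed.

Definition gsh r j :=
  (j %% PP r + PP r * ((digit ns r j).+1 %% NN r) + PP r.+1 * (j %/ PP r.+1))%N.

Lemma gsh_parts r j : (r < size ns)%N ->
  [/\ gsh r j %% PP r = j %% PP r, gsh r j %/ PP r.+1 = j %/ PP r.+1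
    & digit ns r (gsh r j) = ((digit ns r j).+1 %% NN r)%N]%N.
Proof.
move=> hr.
have P0 := PP_gt0 r; have N0 : (0 < NN r)%N by have := NN_ge2 hr; lia.
set a := (j %% PP r)%N; set b := ((digit ns r j).+1 %% NN r)%N; set c := (j %/ PP r.+1)%N.
have ha : (a < PP r)%N by rewrite ltn_mod.
have hb : (b < NN r)%N by rewrite ltn_mod.
have ey : gsh r j = ((c * NN r + b) * PP r + a)%N by rewrite /gsh -/a -/b -/c PPS //; ring.
have [d1 m1] := divmod_small (c * NN r + b) ha.
have [d2 m2] := divmod_small c hb.
rewrite ey digitE d1 m1 m2; split => //.
by rewrite PPS // divnMA d1 d2.
Qed.

Lemma gsh_other r s j : (r < size ns)%N -> (s < size ns)%N -> s != r ->
  digit ns s (gsh r j) = digit ns s j.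
Proof.
move=> hr hs nsr; have [gm gd _] := gsh_parts j hr.
case: (ltngtP s r) nsr => // h _.
  rewrite (digit_mod (gsh r j) hs) (digit_mod j hs).
  have hd : (PP s.+1 %| PP r)%N by rewrite (PP_split h) dvdn_mulr.
  by rewrite -(modn_dvdm (gsh r j) hd) gm (modn_dvdm j hd).
by rewrite !(digit_div _ h) gd.
Qed.

Lemma gsh_lt r j : (r < size ns)%N -> (j < \prod_(m <- ns) m)%N -> (gsh r j < \prod_(m <- ns) m)%N.
Proof.
move=> hr hj.
have hle : (r.+1 <= size ns)%N by [].
move: hj; rewrite -PP_size (PP_split hle).
set Q := (\prod_(x <- _) x)%N => hj.
have P0 := PP_gt0 r; have N0 : (0 < NN r)%N by have := NN_ge2 hr; lia.
have P1 := PP_gt0 r.+1.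
have hc : (j %/ PP r.+1 < Q)%N by rewrite ltn_divLR // mulnC.
have ha : (j %% PP r < PP r)%N by rewrite ltn_mod.
have hb : ((digit ns r j).+1 %% NN r < NN r)%N by rewrite ltn_mod.
rewrite /gsh; move: hc ha hb; rewrite PPS //.
set a := (j %% PP r)%N; set b := (_ %% NN r)%N; set c := (j %/ _)%N.
move=> hc ha hb.
have : (a + PP r * b < PP r * NN r)%N by nia.
nia.
Qed.

Lemma succ_mod_inj N d d' : (d < N)%N -> (d' < N)%N -> (d.+1 %% N = d'.+1 %% N)%N -> d = d'.
Proof.
move=> hd hd'.
have h : forall x, (x < N)%N -> (x.+1 %% N = if x.+1 == N then 0 else x.+1)%N.
  move=> x hx; case: eqP => [->|ne]; first by rewrite modnn.
  by rewrite modn_small //; lia.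
rewrite (h d hd) (h d' hd'); case: eqP; case: eqP; lia.
Qed.

Lemma gsh_inj r j j' : (r < size ns)%N -> gsh r j = gsh r j' -> j = j'.
Proof.
move=> hr e.
have [m1 d1 g1] := gsh_parts j hr; have [m2 d2 g2] := gsh_parts j' hr.
have em : (j %% PP r = j' %% PP r)%N by rewrite -m1 -m2 e.
have ed : (j %/ PP r.+1 = j' %/ PP r.+1)%N by rewrite -d1 -d2 e.
have N0 : (0 < NN r)%N by have := NN_ge2 hr; lia.
have eg : digit ns r j = digit ns r j'.
  apply: (@succ_mod_inj (NN r)); rewrite ?digitE ?ltn_mod //.
  by rewrite -!digitE -g1 -g2 e.
by rewrite (divn_eq j (PP r.+1)) (divn_eq j' (PP r.+1)) !modS // em eg ed.
Qed.

Lemma digits0 j : (j < \prod_(m <- ns) m)%N ->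
  (forall r, (r < size ns)%N -> digit ns r j = 0%N) -> j = 0%N.
Proof.
move=> hj h.
have H : forall r, (r <= size ns)%N -> (j %% PP r = 0)%N.
  elim=> [|r IH] hr; first by rewrite /PP take0 big_nil modn1.
  by rewrite modS // IH ?h //; lia.
by rewrite -(modn_small hj) -PP_size H.
Qed.
End Radix.


Section Supp.
Variable R : realType.
Local Notation C := (complex R).
Variable ns : seq nat.
Hypothesis Hall : all (fun m => (2 <= m)%N) ns.
Local Notation n := (\prod_(m <- ns) m)%N.

Lemma tensor_shift r j k : (r < size ns)%N ->
  fourier_tensor R ns j (gsh ns r k) =
  fourier_tensor R ns j k * expi (2 * pi * (digit ns r j)%:R / (NN ns r)%:R).
Proof.
move=> hr; rewrite /fourier_tensor (bigD1 (Ordinal hr)) //= [in RHS](bigD1 (Ordinal hr)) //=.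
have N0 : (0 < NN ns r)%N by have := NN_ge2 Hall hr; lia.
have [_ _ ->] := gsh_parts Hall k hr.
rewrite (fourier_shift R _ _ N0) -/(NN ns r).
rewrite mulrAC; congr (_ * _); congr (_ * _); apply: eq_bigr.
move=> s hs; rewrite gsh_other //.
Qed.

Lemma gsh_perm r : (r < size ns)%N ->
  exists s : {perm 'I_n}, forall k, val (s k) = gsh ns r k.
Proof.
move=> hr.
pose f (k : 'I_n) : 'I_n := Ordinal (gsh_lt Hall hr (ltn_ord k)).
have finj : injective f.
  by move=> k k' /(congr1 val) /= /(gsh_inj Hall hr) /val_inj.
by exists (perm finj) => k; rewrite permE.
Qed.

Lemma suppression r (f : 'I_n -> nat) (d : 'I_n -> C) : (r < size ns)%N ->
  \sum_(p : 'S_n) \prod_(k < n) (fourier_tensor R ns (f k) (p k) * d k) != 0 ->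
  (NN ns r %| \sum_(k < n) digit ns r (f k))%N.
Proof.
move=> hr hS.
have [s hs] := gsh_perm hr.
have N0 : (0 < NN ns r)%N by have := NN_ge2 Hall hr; lia.
have hA : forall k j, fourier_tensor R ns (f k) (s j) * d k =
    fourier_tensor R ns (f k) j * d k * expi (2 * pi * (digit ns r (f k))%:R / (NN ns r)%:R).
  by move=> k j; rewrite hs tensor_shift // mulrAC.
have := perm_shift hA hS.
by rewrite expi_sum -mulr_suml -mulr_sumr -natr_sum mulr_natl => /expi_eq1; apply.
Qed.
End Supp.

Section S4.

Local Open Scope nat_scope.
Section Comb.
Variable n : nat.
Implicit Types (o : {ffun 'I_n -> 'I_n}) (b : {ffun 'I_n -> bool}).

Lemma card_sum (Q : pred 'I_n) : #|[set k | Q k]| = (\sum_(k < n) Q k)%N.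
Proof.
rewrite -sum1_card big_mkcond /=; apply: eq_bigr => k _; rewrite inE; by case: (Q k).
Qed.

Lemma sum_count o (P : pred 'I_n) (h : nat -> nat) :
  (\sum_(1 <= i < n) #|[set k : 'I_n | (nat_of_ord (o k) == i) && P k]| * h i =
   \sum_(k < n) ((nat_of_ord (o k) != 0%N) && P k) * h (o k))%N.
Proof.
under eq_bigr => i _ do rewrite card_sum big_distrl /=.
rewrite exchange_big /=; apply: eq_bigr => k _.
case: (boolP ((nat_of_ord (o k) != 0%N) && P k)) => hk.
  have hin : (nat_of_ord (o k) \in index_iota 1 n).
    by rewrite mem_index_iota ltn_ord andbT lt0n; case/andP: hk.
  rewrite (bigD1_seq _ hin (iota_uniq _ _)) /= eqxx.
  case/andP: hk => _ ->; rewrite big1 ?addn0 //= => i /negbTE; rewrite eq_sym => ->.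
  by [].
rewrite big1_seq //= => i; rewrite mem_index_iota => /andP[hi _].
case: eqP => //= e; move: hk; rewrite -e; case: (P k) => //=; rewrite andbT; case: i hi e => //. by move=> m _ ->.
Qed.

Lemma count_card o : (\sum_(1 <= j < n) Defs.count o j)%N = #|[set k | nat_of_ord (o k) != 0%N]|.
Proof.
rewrite card_sum.
have := sum_count o predT (fun _ => 1%N).
under eq_bigr => i _ do rewrite muln1.
under [X in _ = X -> _]eq_bigr => i _ do rewrite muln1 andbT.
move=> <-; apply: eq_bigr => i _; apply: eq_card => k; by rewrite !inE andbT.
Qed.

Lemma card_le (Q : pred 'I_n) : (#|[set k | Q k]| <= n)%N.
Proof. by rewrite -[X in (_ <= X)%N](card_ord n) max_card. Qed.

Lemma lossless_ideal_card (R : realType) (U : nat -> nat -> complex R) o : ideal U n (lossless_pattern o) ->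
  #|[set k | nat_of_ord (o k) != 0%N]| = n.-1.
Proof.
case=> _ [] /=; rewrite /lossless_pattern /= count_card => h _.
have := card_le (fun k => nat_of_ord (o k) != 0%N) => hle; set X := #|[set k | nat_of_ord (o k) != 0%N]| in h hle *; lia.
Qed.

Lemma lossy_ideal_card (R : realType) (U : nat -> nat -> complex R) o b : (0 < n)%N -> ideal U n (lossy_pattern o b) ->
  #|[set k | (nat_of_ord (o k) != 0%N) && ~~ b k]| = n.-1.
Proof.
move=> n0 [hs _]; move: hs.
rewrite -(big_mkord xpredT (lossy_pattern o b)) big_ltn // /lossy_pattern /=.
rewrite (@eq_big_nat _ _ _ 1 n _ (fun i => count_lossy o b i)); last by move=> i /andP[hi _]; case: i hi.
rewrite /count_lossy.
have := sum_count o (fun k => ~~ b k) (fun _ => 1%N).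
under eq_bigr => i _ do rewrite muln1.
under [X in _ = X -> _]eq_bigr => i _ do rewrite muln1.
move=> ->; rewrite -card_sum => h; set X := #|[set k | _]| in h *; lia.
Qed.

Lemma pat_eq o b : (0 < n)%N -> (forall k, nat_of_ord (o k) != 0%N -> ~~ b k) ->
  #|[set k | nat_of_ord (o k) != 0%N]| = n.-1 -> lossy_pattern o b = lossless_pattern o.
Proof.
move=> n0 hb hc; apply: funext => j.
rewrite /lossy_pattern /lossless_pattern count_card hc.
case: eqP => [_|/eqP hj]; first lia.
rewrite /count_lossy /count; apply: eq_card => k; rewrite !inE.
case: eqP => //= e; apply: hb; by rewrite e.
Qed.

End Comb.

Lemma mode_sum n (s : nat -> nat) (h : nat -> nat) : (\sum_(i < n) s i)%N = n ->
  (\sum_(k < n) h (nth 0%N (mode_seq n s) k) = \sum_(i < n) s i * h i)%N.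
Proof.
have gen : forall h, (\sum_(x <- mode_seq n s) h x = \sum_(i < n) s i * h i)%N.
  move=> h'; rewrite /mode_seq big_flatten /= big_map -[in RHS](big_mkord xpredT (fun i => s i * h' i)) /index_iota subn0.
  by apply: eq_bigr => i _; rewrite big_nseq iter_addn_0 mulnC.
move=> hs.
have hsz : size (mode_seq n s) = n.
  by rewrite -sum1_size gen; under eq_bigr => i _ do rewrite muln1.
by rewrite -gen (big_nth 0%N) hsz big_mkord.
Qed.

End S4.


Section Main.
Variable R : realType.
Variable n : nat.
Variable Lam : R.
Hypothesis Lam01 : 0 <= Lam <= 1.

Definition W (b : {ffun 'I_n -> bool}) : R := \prod_(k < n) (if b k then Lam else 1 - Lam).

Lemma W_ge0 b : 0 <= W b.
Proof. apply: prodr_ge0 => k _; case: (b k); case/andP: Lam01 => ? ?; lra. Qed.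

Lemma indicator_ge0 (P : Prop) : 0 <= indicator R P.
Proof. by rewrite /indicator; case: asboolP. Qed.

Lemma indicatorT (P : Prop) : P -> indicator R P = 1.
Proof. by move=> hP; rewrite /indicator asboolT. Qed.

Lemma indicatorF (P : Prop) : ~ P -> indicator R P = 0.
Proof. by move=> hP; rewrite /indicator asboolF. Qed.

Lemma weight_sum (Q : pred 'I_n) :
  \sum_(b : {ffun 'I_n -> bool}) W b * (if [forall k, Q k ==> ~~ b k] then 1 else 0)
  = (1 - Lam) ^+ #|[set k | Q k]|.
Proof.
have e : forall b : {ffun 'I_n -> bool}, W b * (if [forall k, Q k ==> ~~ b k] then 1 else 0)
   = \prod_(k < n) ((if b k then Lam else 1 - Lam) * (if Q k && b k then 0 else 1)).
  move=> b; rewrite big_split /=; congr (_ * _).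
  case: forallP => h.
    by rewrite big1 // => k _; have := h k; case: (Q k); case: (b k).
  case: (boolP [exists k, Q k && b k]) => [/existsP[k hk] | /existsPn h'].
    by rewrite (bigD1 k) //= hk mul0r.
  by exfalso; apply: h => k; have := h' k; case: (Q k); case: (b k).
under eq_bigr => b _ do rewrite e.
rewrite -(bigA_distr_bigA (fun k x => (if x then Lam else 1 - Lam) * (if Q k && x then 0 else 1))).
under eq_bigr => k _ do rewrite big_bool /= andbF mulr1.
have -> : #|[set k | Q k]| = #|[pred k | Q k]| by apply: eq_card => k; rewrite !inE.
rewrite -prodr_const.
rewrite [RHS]big_mkcond /=; apply: eq_bigr => k _; rewrite inE.
by case: (Q k); rewrite ?inE /=; ring.
Qed.


Variable U : nat -> nat -> complex R.
Hypothesis n0 : (0 < n)%N.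

Lemma ind_forall (o : {ffun 'I_n -> 'I_n}) (b : {ffun 'I_n -> bool}) :
  (if [forall k, (nat_of_ord (o k) != 0%N) ==> ~~ b k] then 1 else 0 : R) * indicator R (ideal U n (lossless_pattern o))
  <= indicator R (ideal U n (lossy_pattern o b)).
Proof.
case: forallP => h; last by rewrite mul0r indicator_ge0.
rewrite mul1r; have [H|H] := pselect (ideal U n (lossless_pattern o)).
  rewrite (pat_eq n0 _ (lossless_ideal_card H)) ?indicatorT //.
  by move=> k; have := h k => /implyP.
by rewrite indicatorF // indicator_ge0.
Qed.

Lemma inner_ge (o : {ffun 'I_n -> 'I_n}) :
  (1 - Lam) ^+ (n - 1) * indicator R (ideal U n (lossless_pattern o)) <=
  \sum_(b : {ffun 'I_n -> bool}) W b * indicator R (ideal U n (lossy_pattern o b)).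
Proof.
have [H|H] := pselect (ideal U n (lossless_pattern o)); last first.
  by rewrite indicatorF // mulr0 sumr_ge0 // => b _; rewrite mulr_ge0 ?W_ge0 ?indicator_ge0.
rewrite subn1 -(lossless_ideal_card H) -weight_sum mulr_suml.
apply: ler_sum => b _; rewrite -mulrA ler_wpM2l ?W_ge0 //.
have := ind_forall o b; by rewrite indicatorT.
Qed.

Lemma inner_eq (o : {ffun 'I_n -> 'I_n}) :
  (forall b, ideal U n (lossy_pattern o b) -> forall k, nat_of_ord (o k) != 0%N -> ~~ b k) ->
  \sum_(b : {ffun 'I_n -> bool}) W b * indicator R (ideal U n (lossy_pattern o b)) =
  (1 - Lam) ^+ (n - 1) * indicator R (ideal U n (lossless_pattern o)).
Proof.
move=> hsup.
have pt : forall b, indicator R (ideal U n (lossy_pattern o b)) =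
  (if [forall k, (nat_of_ord (o k) != 0%N) ==> ~~ b k] then 1 else 0) * indicator R (ideal U n (lossless_pattern o)).
  move=> b; have [H|H] := pselect (ideal U n (lossy_pattern o b)).
    have hb := hsup b H.
    have hf : [forall k, (nat_of_ord (o k) != 0%N) ==> ~~ b k] by apply/forallP => k; apply/implyP/hb.
    have hc : #|[set k | nat_of_ord (o k) != 0%N]| = n.-1.
      rewrite -(lossy_ideal_card n0 H); apply: eq_card => k; rewrite !inE.
      by case: (boolP (nat_of_ord (o k) != 0%N)) => //= hk; rewrite hb.
    by rewrite hf mul1r (indicatorT H) indicatorT // -(pat_eq n0 hb hc).
  rewrite indicatorF //; case: (boolP [forall k, (nat_of_ord (o k) != 0%N) ==> ~~ b k]) => [/forallP h|_]; last by rewrite mul0r.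
  have [H'|H'] := pselect (ideal U n (lossless_pattern o)); last by rewrite indicatorF ?mulr0.
  exfalso; apply: H; rewrite (pat_eq n0 _ (lossless_ideal_card H')) //.
  by move=> k; have := h k => /implyP.
under eq_bigr => b _ do rewrite pt mulrA.
rewrite -mulr_suml weight_sum.
have [H|H] := pselect (ideal U n (lossless_pattern o)); last by rewrite indicatorF ?mulr0.
by rewrite (lossless_ideal_card H) subn1.
Qed.
End Main.


Lemma sup_cond (R : realType) (ns : seq nat) (Hall : all (fun m => (2 <= m)%N) ns) K
   (c : {ffun 'I_(\prod_(m <- ns) m) -> 'I_K}) c0 (hc : forall i, c i = c0) o t b :
  out_amp (fourier_tensor R ns) c o t != 0 ->
  ideal (fourier_tensor R ns) (\prod_(m <- ns) m) (lossy_pattern o b) ->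
  forall k, nat_of_ord (o k) != 0%N -> ~~ b k.
Proof.
set n := (\prod_(m <- ns) m)%N => hA hid k1 hk1; apply/negP => hb1.
have n0 : (0 < n)%N by apply: (leq_ltn_trans _ (ltn_ord k1)).
have hcard := lossy_ideal_card n0 hid.
have others : forall k, k != k1 -> (nat_of_ord (o k) != 0%N) && ~~ b k.
  have hsub : [set k | (nat_of_ord (o k) != 0%N) && ~~ b k] \subset [set~ k1].
    apply/fintype.subsetP => k; rewrite !inE; apply: contraTneq => ->; by rewrite hb1 andbF.
  have := subset_cardP _ hsub; rewrite hcard cardsC1 card_ord => /(_ erefl) H k hk.
  by have := H k; rewrite !inE hk.
case: (hid) => hs [h0 hf].
suff e : nat_of_ord (o k1) = 0%N by rewrite e in hk1.
apply: (digits0 Hall (ltn_ord (o k1))) => r hr.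
have N0 : (0 < NN ns r)%N by have := NN_ge2 Hall hr; lia.
have d1 : (NN ns r %| \sum_(k < n) digit ns r (o k))%N.
  apply: (suppression Hall (d := fun k => if t k == c0 then 1 else 0 : complex R) hr).
  apply: contra hA => /eqP h0'; rewrite /out_amp.
  rewrite (eq_bigr (fun p : 'S_n => \prod_(k < n) (fourier_tensor R ns (o k) (p k) * (if t k == c0 then 1 else 0)))).
    by rewrite h0' mul0r.
  by move=> p _; apply: eq_bigr => k _; rewrite hc.
have d2 : (NN ns r %| \sum_(k < n) digit ns r (nth 0%N (mode_seq n (lossy_pattern o b)) k))%N.
  apply: (suppression Hall (d := fun k => 1 : complex R) hr).
  apply/eqP => h0'; apply: hf; rewrite /fock_amp.
  rewrite (eq_bigr (fun p : 'S_n => \prod_(k < n) (fourier_tensor R ns (nth 0%N (mode_seq n (lossy_pattern o b)) k) (p k) * 1))).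
    by rewrite h0' mul0r.
  by move=> p _; apply: eq_bigr => k _; rewrite mulr1.
rewrite (mode_sum _ hs) -(big_mkord xpredT (fun i => lossy_pattern o b i * digit ns r i)%N) big_ltn //= in d2.
rewrite (@eq_big_nat _ _ _ 1 n _ (fun i => count_lossy o b i * digit ns r i)%N) in d2; last first.
  by move=> i /andP[hi _]; case: i hi.
rewrite /count_lossy sum_count digitE div0n mod0n muln0 add0n in d2.
rewrite (bigD1 k1) //= hb1 andbF mul0n add0n in d2.
rewrite (eq_bigr (fun k => digit ns r (o k))) in d2; last first.
  by move=> k hk; rewrite others // mul1n.
rewrite (bigD1 k1) //= dvdn_addl // in d1.
move: d1; rewrite /dvdn modn_small ?digitE ?ltn_mod //.
by move/eqP.
Qed.


Unset Implicit Arguments.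
Theorem theorem7 (R : realType) (M : noise_model) (ns : seq nat) (eps lam : R) :
  (forall r, M = URS r -> (1 <= r)%N) ->
  all (fun m => (2 <= m)%N) ns ->
  (2 < \prod_(m <- ns) m)%N ->
  0 <= eps <= 1 -> 0 <= lam <= 1 ->
  let n := (\prod_(m <- ns) m)%N in
  let U := fourier_tensor R ns in
  let Lam := 1 - (1 - lam) `^ (log2 n%:R) in
  [/\ herald_lossy M U n eps Lam >= (1 - Lam) ^+ (n - 1) * herald_lossless M U n eps,
      (1 - Lam) ^+ (n - 1) * herald_lossless M U n eps
        = (1 - lam) `^ ((n - 1)%:R * log2 n%:R) * herald_lossless M U n eps,
      herald_lossy M U n 0 Lam = (1 - Lam) ^+ (n - 1) * herald_lossless M U n 0
    & (1 - Lam) ^+ (n - 1) * herald_lossless M U n 0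
        = (1 - lam) `^ ((n - 1)%:R * log2 n%:R) * herald_lossless M U n 0].
Proof.
move=> hM Hall hn heps hlam n U Lam.
have n0 : (0 < n)%N by rewrite /n; lia.
have hlog : 0 < log2 (n%:R : R).
  rewrite /log2 divr_gt0 // ln_gt0 // ?ltr1n //; rewrite /n; lia.
have hpow : 1 - Lam = (1 - lam) `^ (log2 n%:R) by rewrite /Lam; ring.
have Lam01 : 0 <= Lam <= 1.
  have h1 : (1 - lam) `^ (log2 n%:R) <= 1.
    apply: (@le_trans _ _ (1 `^ (log2 (n%:R : R)))); last by rewrite powR1.
    apply: ge0_ler_powR; rewrite ?nnegrE; try lra; exact: ltW.
  have h0 := powR_ge0 (1 - lam) (log2 (n%:R : R)).
  rewrite /Lam; lra.
have eqpow : (1 - Lam) ^+ (n - 1) = (1 - lam) `^ ((n - 1)%:R * log2 n%:R).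
  by rewrite hpow -powR_mulrn ?powR_ge0 // -powRrM mulrC.
have cp_ge0 : forall e : R, 0 <= e <= 1 -> forall c, 0 <= @config_prob R M n e c.
  move=> e he c; apply: prodr_ge0 => i _; move: (nat_of_ord (c i)) => l.
  rewrite /label_prob; case: (M) => [r|]; repeat case: ifP => _; rewrite ?divr_ge0 //; lra.
have sq_ge0 : forall z : complex R, 0 <= sqmod z.
  by move=> z; rewrite /sqmod addr_ge0 // sqr_ge0.
split; last 2 first.
-
  rewrite /herald_lossy /herald_lossless mulr_sumr; apply: eq_bigr => c _.
  case: (boolP [forall i, nat_of_ord (c i) == 0%N]) => [/forallP hc|/forallPn [i hi]]; last first.
    have -> : @config_prob R M n 0 c = 0.
      rewrite /config_prob (bigD1 i) //=.
      suff -> : label_prob M 0 i (c i) = 0 :> R by rewrite mul0r.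
      move: (nat_of_ord (c i)) hi => l hl.
      rewrite /label_prob (negbTE hl).
      by case: (M) => [r|]; repeat case: ifP => _; rewrite ?mul0r.
    by rewrite !mul0r mulr0.
  pose c0 := c (Ordinal n0).
  have hc0 : forall i, c i = c0 by move=> i; apply/val_inj; rewrite /= (eqP (hc i)) (eqP (hc _)).
  rewrite mulrCA; congr (_ * _).
  rewrite mulr_sumr; apply: eq_bigr => o _; rewrite mulr_sumr; apply: eq_bigr => t _.
  rewrite mulrCA.
  case: (eqVneq (out_amp U c o t) 0) => [->|hA].
    by rewrite /sqmod /= expr0n /= addr0 !mul0r.
  congr (_ * _).
  have := @inner_eq R n Lam U n0 o; rewrite /W => -> //.
  move=> b; exact: (sup_cond Hall hc0 hA).
- by rewrite eqpow.
- rewrite /herald_lossy /herald_lossless mulr_sumr; apply: ler_sum => c _.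
  rewrite mulrCA; apply: ler_wpM2l; first exact: cp_ge0.
  rewrite mulr_sumr; apply: ler_sum => o _; rewrite mulr_sumr; apply: ler_sum => t _.
  rewrite mulrCA; apply: ler_wpM2l => //.
  exact: (inner_ge Lam01 U n0).
- by rewrite eqpow.
Qed.
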